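(* Skeptic can weakly force the event \[ E_4:=\Bigl\{\xi:\ \limsup_{n\to\infty}|s_n|<\infty\ \ \text{or}\ \ \bigl(\limsup_{n\to\infty}s_n=\infty\ \text{and}\ \liminf_{n\to\infty}s_n=-\infty\bigr)\Bigr\}. \]
   Context: Fair-coin game: in rounds $n=1,2,\dots$ Skeptic announces $M_n\in\mathbb{R}$ (depending only on $x_1,\dots,x_{n-1}$), then Reality announces $x_n\in\{-1,1\}$. A path is an infinite sequence $\xi=x_1x_2\cdots\in\{-1,1\}^{\mathbb{N}}$, and $\Omega$ is the set of paths. We write $s_n:=x_1+\cdots+x_n$, with $s_0=0$. The capital process of a strategy with zero initial capital is $\mathcal{K}^{\mathcal{P}}_n=\sum_{k=1}^nM_kx_k$. Skeptic weakly forces $E\subseteq\Omega$ if some strategy $\mathcal{P}$ has $\mathcal{K}^{\mathcal{P}}_n(\xi)\ge-1$ for all $\xi\in\Omega$ and $n\ge0$, and $\limsup_n\mathcal{K}^{\mathcal{P}}_n(\xi)=\infty$ for every $\xi\notin E$. *)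

(* Defs.v *)
From Stdlib Require Import Reals List ZArith.
Open Scope R_scope.

(* A path xi = x_1 x_2 ... is encoded as xi : nat -> R with xi k = x_{k+1}. *)
Definition is_path (xi : nat -> R) : Prop := forall k, xi k = 1 \/ xi k = -1.

Fixpoint prefix (xi : nat -> R) (n : nat) : list R :=
  match n with
  | O => nil
  | S m => prefix xi m ++ (xi m :: nil)
  end.

Fixpoint S_n (xi : nat -> R) (n : nat) : R :=
  match n with
  | O => 0
  | S m => S_n xi m + xi m
  end.

(* A strategy: M_n is a function of the history x_1 ... x_{n-1}. *)
Definition strategy := list R -> R.

Fixpoint capital (P : strategy) (xi : nat -> R) (n : nat) : R :=
  match n with
  | O => 0
  | S m => capital P xi m + P (prefix xi m) * xi m
  end.

Definition limsup_infty (u : nat -> R) : Prop := forall C : R, forall N : nat, exists n, (n >= N)%nat /\ u n > C.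
Definition liminf_minfty (u : nat -> R) : Prop := forall C : R, forall N : nat, exists n, (n >= N)%nat /\ u n < C.
Definition limsup_abs_finite (u : nat -> R) : Prop := exists C : R, exists N : nat, forall n, (n >= N)%nat -> Rabs (u n) <= C.

Definition weakly_forces (E : (nat -> R) -> Prop) : Prop :=
  exists P : strategy,
    (forall xi, is_path xi -> forall n, capital P xi n >= -1) /\
    (forall xi, is_path xi -> ~ E xi -> limsup_infty (capital P xi)).

Definition E4 (xi : nat -> R) : Prop :=
  limsup_abs_finite (S_n xi) \/
  (limsup_infty (S_n xi) /\ liminf_minfty (S_n xi)).

(* Main.v *)
Require Import Defs.
From Stdlib Require Import Reals Lra Lia List Classical.
Open Scope R_scope.

Definition negp (xi : nat -> R) : nat -> R := fun k => - xi k.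

Lemma S_n_neg xi n : S_n (negp xi) n = - S_n xi n.
Proof. induction n; simpl; [ring|rewrite IHn; unfold negp; ring]. Qed.

Lemma prefix_neg xi n : prefix (negp xi) n = map Ropp (prefix xi n).
Proof. induction n; simpl; [reflexivity|rewrite IHn, map_app; reflexivity]. Qed.

Lemma cap_add P1 P2 xi n :
  capital (fun l => P1 l + P2 l) xi n = capital P1 xi n + capital P2 xi n.
Proof. induction n; simpl; [ring|rewrite IHn; ring]. Qed.

Lemma cap_negstrat A xi n :
  capital (fun l => - A (map Ropp l)) xi n = capital A (negp xi) n.
Proof. induction n; simpl; [ring|rewrite IHn, prefix_neg; unfold negp; ring]. Qed.

Lemma negp_path xi : is_path xi -> is_path (negp xi).
Proof. intros H k; unfold negp; destruct (H k) as [e|e]; rewrite e; lra. Qed.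

Definition step (st : nat * R) (x : R) : nat * R :=
  let (m, s) := st in
  if Rlt_dec (INR m) (s + x) then (S m, s + x) else (m, s + x).
Definition stt (l : list R) := fold_left step l (0%nat, 0).
Definition w (m : nat) : R := (/2) ^ (m + 2).
Definition Ast : strategy := fun l => - w (fst (stt l)).
Definition mm xi n := fst (stt (prefix xi n)).

Lemma stt_S xi n : stt (prefix xi (S n)) = step (stt (prefix xi n)) (xi n).
Proof. unfold stt; simpl; rewrite fold_left_app; reflexivity. Qed.

Lemma snd_stt xi n : snd (stt (prefix xi n)) = S_n xi n.
Proof.
  induction n; [reflexivity|].
  rewrite stt_S; destruct (stt (prefix xi n)) as [m s]; simpl in *; subst.
  destruct Rlt_dec; reflexivity.
Qed.

Lemma mm_S xi n : mm xi (S n) =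
  if Rlt_dec (INR (mm xi n)) (S_n xi n + xi n) then S (mm xi n) else mm xi n.
Proof.
  unfold mm; pose proof (snd_stt xi n). rewrite stt_S.
  destruct (stt (prefix xi n)) as [m s]; simpl in *; subst.
  destruct Rlt_dec; reflexivity.
Qed.

Lemma w_S m : w (S m) = w m / 2.
Proof. unfold w. replace (S m + 2)%nat with (S (m+2)) by lia. simpl. field. Qed.

Lemma w_pos m : 0 < w m.
Proof. unfold w; apply pow_lt; lra. Qed.

Lemma w_mono m k : w (m + k) <= w m.
Proof.
  induction k. rewrite Nat.add_0_r; lra.
  replace (m + S k)%nat with (S (m + k)) by lia. rewrite w_S.
  pose proof (w_pos (m+k)). lra.
Qed.

Lemma inv xi : is_path xi -> forall n,
  S_n xi n <= INR (mm xi n) /\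
  capital Ast xi n >= w (mm xi n) * (INR (mm xi n) - S_n xi n + 2) - 1/2.
Proof.
  intros Hp n; induction n.
  - change (mm xi 0) with 0%nat. simpl. unfold w; simpl. lra.
  - destruct IHn as [H1 H2].
    assert (Hc : capital Ast xi (S n) = capital Ast xi n - w (mm xi n) * xi n)
      by (simpl; unfold Ast; fold (mm xi n); ring).
    rewrite Hc. rewrite mm_S. simpl S_n.
    pose proof (w_pos (mm xi n)). set (wm := w (mm xi n)) in *.
    set (M := INR (mm xi n)) in *. set (s := S_n xi n) in *.
    destruct Rlt_dec as [Hl|Hl].
    + destruct (Hp n) as [e|e]; rewrite e in *; [|lra].
      rewrite w_S, S_INR. fold wm M. split; [lra|].
      assert (0 <= wm * (M - s)) by (apply Rmult_le_pos; lra). 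
      assert (wm / 2 * (M + 1 - (s + 1) + 2) = wm * (M - s + 2) - wm - wm * (M - s) / 2) by field.
      lra.
    + apply Rnot_lt_le in Hl. split; [fold M; lra|]. fold wm. fold M.
      assert (wm * (M - (s + xi n) + 2) = wm * (M - s + 2) - wm * xi n) by ring.
      lra.
Qed.

Lemma cap_lb xi : is_path xi -> forall n, capital Ast xi n >= -1/2.
Proof.
  intros Hp n; destruct (inv xi Hp n) as [H1 H2].
  pose proof (w_pos (mm xi n)).
  assert (0 <= w (mm xi n) * (INR (mm xi n) - S_n xi n + 2))
    by (apply Rmult_le_pos; lra). lra.
Qed.

Lemma S_le xi : is_path xi -> forall n, S_n xi n <= INR n.
Proof.
  intros Hp n; induction n; [simpl; lra|]. rewrite S_INR; simpl S_n.
  destruct (Hp n) as [e|e]; rewrite e; lra.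
Qed.

Lemma mm_bound xi D : is_path xi -> (forall n, S_n xi n <= INR D) ->
  forall n, (mm xi n <= D)%nat.
Proof.
  intros Hp HD n; induction n.
  - change (mm xi 0) with 0%nat; lia.
  - rewrite mm_S. destruct Rlt_dec as [Hl|Hl]; [|lia].
    pose proof (HD (S n)). simpl in H.
    assert (INR (mm xi n) < INR D) by lra. apply INR_lt in H0. lia.
Qed.

Lemma key xi : is_path xi ->
  (exists C N, forall n, (n >= N)%nat -> S_n xi n <= C) ->
  ~ limsup_abs_finite (S_n xi) ->
  forall C' N', exists n, (n >= N')%nat /\ capital Ast xi n > C' + 1/2.
Proof.
  intros Hp [C [N HC]] Hnf C' N'.
  destruct (INR_unbounded C) as [D0 HD0].
  set (D := Nat.max D0 N).
  assert (HD : forall n, S_n xi n <= INR D).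
  { intro n. destruct (Compare_dec.le_lt_dec N n) as [h|h].
    - pose proof (HC n h). assert (INR D0 <= INR D) by (apply le_INR; lia). lra.
    - pose proof (S_le xi Hp n). assert (INR n <= INR D) by (apply le_INR; lia). lra. }
  pose proof (mm_bound xi D Hp HD) as Hm.
  pose proof (w_pos D) as HwD.
  set (C0 := Rmax (INR D) ((C'+1)/w D)).
  assert (Hex : exists n, (n >= N')%nat /\ Rabs (S_n xi n) > C0).
  { apply NNPP; intro H. apply Hnf. exists C0, N'. intros n Hn.
    apply Rnot_lt_le. intro. apply H. exists n. split; auto. }
  destruct Hex as [n [Hn Hab]]. exists n. split; auto.
  assert (Hs : S_n xi n < - C0).
  { pose proof (HD n). pose proof (Rmax_l (INR D) ((C'+1)/w D)).
    fold C0 in H0. unfold Rabs in Hab. destruct Rcase_abs; lra. }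
  assert (H1 : C0 * w D >= C' + 1).
  { pose proof (Rmax_r (INR D) ((C'+1)/w D)). fold C0 in H.
    assert ((C'+1)/w D * w D = C'+1) by (field; lra). nra. }
  destruct (inv xi Hp n) as [H2 H3].
  pose proof (Hm n).
  assert (Hw : w D <= w (mm xi n)).
  { replace D with (mm xi n + (D - mm xi n))%nat by lia. apply w_mono. }
  pose proof (pos_INR (mm xi n)).
  assert (w (mm xi n) * (INR (mm xi n) - S_n xi n + 2) >= w D * (- S_n xi n)).
  { assert (0 <= w (mm xi n) * (INR (mm xi n) + 2)) by (apply Rmult_le_pos; lra). nra. }
  nra.
Qed.

Lemma not_limsup u : ~ limsup_infty u -> exists C N, forall n, (n >= N)%nat -> u n <= C.
Proof.
  intro H. apply NNPP; intro H'. apply H. intros C N. apply NNPP; intro H''.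
  apply H'. exists C, N. intros n Hn. apply Rnot_lt_le. intro. apply H''.
  exists n. split; auto.
Qed.

Lemma not_liminf u : ~ liminf_minfty u -> exists C N, forall n, (n >= N)%nat -> C <= u n.
Proof.
  intro H. apply NNPP; intro H'. apply H. intros C N. apply NNPP; intro H''.
  apply H'. exists C, N. intros n Hn. apply Rnot_lt_le. intro. apply H''.
  exists n. split; auto.
Qed.

Theorem corollary2 : weakly_forces E4.
Proof.
  exists (fun l => Ast l + - Ast (map Ropp l)). split.
  - intros xi Hp n. rewrite cap_add, cap_negstrat.
    pose proof (cap_lb xi Hp n). pose proof (cap_lb _ (negp_path xi Hp) n). lra.
  - intros xi Hp HE. unfold E4 in HE. apply not_or_and in HE as [Hf H2].
    intros C' N'.
    destruct (classic (limsup_infty (S_n xi))) as [Hs|Hs].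
    + assert (Hi : ~ liminf_minfty (S_n xi)) by tauto.
      destruct (not_liminf _ Hi) as [C [N HC]].
      assert (Hb : exists C N, forall n, (n >= N)%nat -> S_n (negp xi) n <= C).
      { exists (-C), N. intros n Hn. rewrite S_n_neg. pose proof (HC n Hn). lra. }
      assert (Hnf : ~ limsup_abs_finite (S_n (negp xi))).
      { intros [C1 [N1 H]]. apply Hf. exists C1, N1. intros n Hn.
        pose proof (H n Hn). rewrite S_n_neg, Rabs_Ropp in H0. auto. }
      destruct (key _ (negp_path xi Hp) Hb Hnf C' N') as [n [Hn Hk]].
      exists n. split; auto. rewrite cap_add, cap_negstrat.
      pose proof (cap_lb xi Hp n). lra.
    + destruct (key xi Hp (not_limsup _ Hs) Hf C' N') as [n [Hn Hk]].
      exists n. split; auto. rewrite cap_add, cap_negstrat.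
      pose proof (cap_lb _ (negp_path xi Hp) n). lra.
Qed.
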